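(* Let $e_0,e_1\ge0$ be integers and let $\mathbf{x}_1,\mathbf{x}_2\in\mathbb{F}_2^n$ be such that $(\mathbf{x}_1,\mathbf{x}_2)$ are $(e_0+e_1,e_0+e_1)$-close. Then there exists a vector $\mathbf{y}\in\mathbb{F}_2^n$ such that both $(\mathbf{x}_1,\mathbf{y})$ and $(\mathbf{x}_2,\mathbf{y})$ are $(e_0,e_1)$-close.
   Context: For $\mathbf{x}\in\mathbb{F}_2^n$, $\mathrm{supp}(\mathbf{x})$ is the set of coordinates where $\mathbf{x}$ is $1$. For $\mathbf{x},\mathbf{y}\in\mathbb{F}_2^n$, the ordered pair $(\mathbf{x},\mathbf{y})$ is called $(e_0,e_1)$-far iff $|\mathrm{supp}(\mathbf{y})\setminus\mathrm{supp}(\mathbf{x})|>e_0$ or $|\mathrm{supp}(\mathbf{x})\setminus\mathrm{supp}(\mathbf{y})|>e_1$; otherwise $(\mathbf{x},\mathbf{y})$ is $(e_0,e_1)$-close. *)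

(* Defs.v *)
From mathcomp Require Import all_boot all_algebra.
Set Implicit Arguments. Unset Strict Implicit. Unset Printing Implicit Defensive.
Local Open Scope ring_scope.

Definition supp (n : nat) (x : 'rV['F_2]_n) : {set 'I_n} :=
  [set i | x 0 i != 0].

Definition far (e0 e1 : nat) (n : nat) (x y : 'rV['F_2]_n) : Prop :=
  (e0 < #|supp y :\: supp x|)%N \/ (e1 < #|supp x :\: supp y|)%N.

Definition close (e0 e1 : nat) (n : nat) (x y : 'rV['F_2]_n) : Prop :=
  ~ far e0 e1 x y.

(* Main.v *)
Require Import Defs.
From mathcomp Require Import all_boot all_algebra.
From mathcomp Require Import zify.

Lemma ex_sub_card (T : finType) (A : {set T}) k :
  (k <= #|A|)%N -> exists2 B : {set T}, B \subset A & #|B| = k.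
Proof.
elim: k => [_|k IH hk]; first by exists set0; rewrite ?sub0set ?cards0.
have [B sBA cB] := IH (ltnW hk).
have : (0 < #|A :\: B|)%N by rewrite cardsD (setIidPr sBA) cB; lia.
case/card_gt0P => x; rewrite inE => /andP [xB xA].
exists (x |: B); first by rewrite subUset sub1set xA sBA.
by rewrite cardsU1 xB cB.
Qed.

Lemma sets_main (T : finType) (S1 S2 : {set T}) e0 e1 :
  (#|S2 :\: S1| <= e0 + e1)%N -> (#|S1 :\: S2| <= e0 + e1)%N ->
  exists Y : {set T},
    [/\ (#|Y :\: S1| <= e0)%N, (#|S1 :\: Y| <= e1)%N,
        (#|Y :\: S2| <= e0)%N & (#|S2 :\: Y| <= e1)%N].
Proof.
move=> hB hA.
have [A' sA cA] := ex_sub_card _ _ _ (geq_minl #|S1 :\: S2| e0).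
have [B' sB cB] := ex_sub_card _ _ _ (geq_minl #|S2 :\: S1| e0).
exists ((S1 :&: S2) :|: A' :|: B').
have E1 : ((S1 :&: S2) :|: A' :|: B') :\: S1 = B'.
  apply/setP => i; move: (subsetP sA i) (subsetP sB i); rewrite !inE.
  by case: (boolP (i \in A')); case: (boolP (i \in B')); case: (boolP (i \in S1)); case: (boolP (i \in S2)) => _ _ _ _ /implyP h1 /implyP h2; move: h1 h2 => /= h1 h2.
have E2 : S1 :\: ((S1 :&: S2) :|: A' :|: B') = (S1 :\: S2) :\: A'.
  apply/setP => i; move: (subsetP sA i) (subsetP sB i); rewrite !inE.
  by case: (boolP (i \in A')); case: (boolP (i \in B')); case: (boolP (i \in S1)); case: (boolP (i \in S2)) => _ _ _ _ /implyP h1 /implyP h2; move: h1 h2 => /= h1 h2.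
have E3 : ((S1 :&: S2) :|: A' :|: B') :\: S2 = A'.
  apply/setP => i; move: (subsetP sA i) (subsetP sB i); rewrite !inE.
  by case: (boolP (i \in A')); case: (boolP (i \in B')); case: (boolP (i \in S1)); case: (boolP (i \in S2)) => _ _ _ _ /implyP h1 /implyP h2; move: h1 h2 => /= h1 h2.
have E4 : S2 :\: ((S1 :&: S2) :|: A' :|: B') = (S2 :\: S1) :\: B'.
  apply/setP => i; move: (subsetP sA i) (subsetP sB i); rewrite !inE.
  by case: (boolP (i \in A')); case: (boolP (i \in B')); case: (boolP (i \in S1)); case: (boolP (i \in S2)) => _ _ _ _ /implyP h1 /implyP h2; move: h1 h2 => /= h1 h2.
move: hA hB; rewrite E1 E2 E3 E4 !cardsD (setIC S2 S1) (setIidPr sA) (setIidPr sB) cA cB.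
rewrite !cardsD (setIC S2 S1); move=> *; split; lia.
Qed.

Theorem lemma1 (e0 e1 n : nat) (x1 x2 : 'rV['F_2]_n) :
  close (e0 + e1) (e0 + e1) x1 x2 ->
  exists y : 'rV['F_2]_n, close e0 e1 x1 y /\ close e0 e1 x2 y.
Proof.
rewrite /close /far => H.
have hB : (#|supp x2 :\: supp x1| <= e0 + e1)%N by rewrite leqNgt; apply/negP => h; apply: H; left.
have hA : (#|supp x1 :\: supp x2| <= e0 + e1)%N by rewrite leqNgt; apply/negP => h; apply: H; right.
have [Y [h1 h2 h3 h4]] := sets_main _ _ _ _ _ hB hA.
exists (\row_i (if i \in Y then 1 else 0))%R.
have -> : supp ((\row_i (if i \in Y then 1 else 0))%R : 'rV['F_2]_n) = Y.
  by apply/setP => i; rewrite !inE mxE; case: (i \in Y).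
split; case; rewrite ltnNge; [move/negP; apply; exact h1 | move/negP; apply; exact h2
  | move/negP; apply; exact h3 | move/negP; apply; exact h4].
Qed.
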